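(* Let $i\in\{1,2,3',3'',4\}$. For every $G\in\mathcal{G}_i$ there exists a finite topology $\tau$ on $V(G)$ such that $G_i(\tau)\cong G$ and $m_\tau(x)\ne m_\tau(y)$ for all distinct $x,y\in V(G)$.
   Context: A finite topology $\tau$ on a finite set $X$ is a family of subsets of $X$ (open sets) containing $\emptyset,X$ and closed under unions and intersections; complements of open sets are closed. $m_\tau(x)$ is the intersection of all open sets containing $x$. Separation of distinct $x,y$: $T_1$-separated if there are open $U_x,U_y$ with $x\in U_x\not\ni y$, $y\in U_y\not\ni x$; $T_2$-separated if they have disjoint open neighborhoods; with (a): exist closed $J$, open $U_J,U_y$, $x\in J\subseteq U_J$, $y\in U_y$, $U_J\cap U_y=\emptyset$, and (b): exist closed $K$, open $U_x,U_K$, $x\in U_x$, $y\in K\subseteq U_K$, $U_x\cap U_K=\emptyset$: $T_{3'}$-separated if (a) or (b), $T_{3''}$-separated if (a) and (b); $T_4$-separated if there exist closed $J\ni x$, $K\ni y$ and disjoint open $U_J\supseteq J$, $U_K\supseteq K$. $G_i(\tau)$ is the simple graph on $X$ where distinct $x,y$ are adjacent iff not $T_i$-separated; $\mathcal{G}_i$ is the class of graphs isomorphic to some $G_i(\tau)$ with $\tau$ a finite topology. *)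

(* Defs.v *)
From mathcomp Require Import all_boot.
Set Implicit Arguments. Unset Strict Implicit. Unset Printing Implicit Defensive.

(* A finite topology on T: a family of subsets containing set0 and setT,
   closed under (binary, hence all finite) unions and intersections. *)
Definition is_topology (T : finType) (tau : {set {set T}}) : Prop :=
  [/\ set0 \in tau, setT \in tau,
      (forall U V, U \in tau -> V \in tau -> U :|: V \in tau) &
      (forall U V, U \in tau -> V \in tau -> U :&: V \in tau)].

Definition is_open (T : finType) (tau : {set {set T}}) (U : {set T}) : bool := U \in tau.
Definition is_closed (T : finType) (tau : {set {set T}}) (C : {set T}) : bool := (~: C) \in tau.

Definition mset (T : finType) (tau : {set {set T}}) (x : T) : {set T} :=
  \bigcap_(U in tau | x \in U) U.

Section Sep.
Variables (T : finType) (tau : {set {set T}}).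

Definition T1_sep (x y : T) : bool :=
  [exists Ux : {set T}, exists Uy : {set T},
    [&& is_open tau Ux, is_open tau Uy, x \in Ux, y \notin Ux, y \in Uy & x \notin Uy]].

Definition T2_sep (x y : T) : bool :=
  [exists Ux : {set T}, exists Uy : {set T},
    [&& is_open tau Ux, is_open tau Uy, x \in Ux, y \in Uy & Ux :&: Uy == set0]].

Definition T3a_sep (x y : T) : bool :=
  [exists J : {set T}, exists UJ : {set T}, exists Uy : {set T},
    [&& is_closed tau J, is_open tau UJ, is_open tau Uy, x \in J, J \subset UJ,
        y \in Uy & UJ :&: Uy == set0]].

Definition T3b_sep (x y : T) : bool :=
  [exists K : {set T}, exists Ux : {set T}, exists UK : {set T},
    [&& is_closed tau K, is_open tau Ux, is_open tau UK, x \in Ux, y \in K,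
        K \subset UK & Ux :&: UK == set0]].

Definition T3'_sep (x y : T) : bool := T3a_sep x y || T3b_sep x y.
Definition T3''_sep (x y : T) : bool := T3a_sep x y && T3b_sep x y.

Definition T4_sep (x y : T) : bool :=
  [exists J : {set T}, exists K : {set T}, exists UJ : {set T}, exists UK : {set T},
    [&& is_closed tau J, is_closed tau K, x \in J, y \in K, is_open tau UJ,
        is_open tau UK, J \subset UJ, K \subset UK & UJ :&: UK == set0]].
End Sep.

Inductive sep_index := i1 | i2 | i3' | i3'' | i4.

Definition separated (i : sep_index) (T : finType) (tau : {set {set T}}) : rel T :=
  match i with
  | i1 => T1_sep tau
  | i2 => T2_sep tau
  | i3' => T3'_sep tau
  | i3'' => T3''_sep tau
  | i4 => T4_sep tau
  end.

Definition sep_graph (i : sep_index) (T : finType) (tau : {set {set T}}) : rel T :=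
  fun x y => (x != y) && ~~ separated i tau x y.

Definition simple_graph (T : finType) (e : rel T) : Prop := symmetric e /\ irreflexive e.

Definition graph_iso (T1 T2 : finType) (e1 : rel T1) (e2 : rel T2) : Prop :=
  exists f : T1 -> T2, bijective f /\ forall x y, e1 x y = e2 (f x) (f y).

Definition in_class (i : sep_index) (T : finType) (e : rel T) : Prop :=
  exists (X : finType) (tau : {set {set X}}), is_topology tau /\ graph_iso (sep_graph i tau) e.

(* Main.v *)
Require Import Defs.
From mathcomp Require Import all_boot.

Set Implicit Arguments. Unset Strict Implicit. Unset Printing Implicit Defensive.

Section Constr.
Variables (X : finType) (tau : {set {set X}}).
Hypothesis top : is_topology tau.
Variables (T : finType) (h : T -> X).
Hypothesis hsurj : forall x, exists t, h t = x.

Definition le (x y : X) : bool := [forall U in tau, (y \in U) ==> (x \in U)].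

Lemma leP x y : reflect (forall U, U \in tau -> y \in U -> x \in U) (le x y).
Proof.
apply: (iffP forallP) => H.
- by move=> U Ut yU; move: (H U); rewrite Ut yU.
- by move=> U; apply/implyP => Ut; apply/implyP; apply: H.
Qed.

Lemma le_refl x : le x x.
Proof. by apply/leP. Qed.

Lemma le_trans x y z : le x y -> le y z -> le x z.
Proof. by move=> /leP H1 /leP H2; apply/leP => U Ut zU; apply: H1 => //; apply: H2. Qed.

Lemma M_open y : [set x | le x y] \in tau.
Proof.
case: top => t0 tT tU tI.
have -> : [set x | le x y] = \bigcap_(U in tau | y \in U) U.
  apply/setP => x; rewrite inE; apply/leP/bigcapP => H U.
  - by move=> /andP [Ut yU]; apply: H.
  - by move=> Ut yU; apply: H; rewrite Ut yU.
apply: (big_ind (fun S => S \in tau)) => //.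
by move=> U /andP [].
Qed.

Lemma down_open (D : {set X}) : (forall x y, y \in D -> le x y -> x \in D) -> D \in tau.
Proof.
move=> H.
case: top => t0 tT tU tI.
have -> : D = \bigcup_(y in D) [set x | le x y].
  apply/setP => x; apply/idP/bigcupP.
  - by move=> xD; exists x => //; rewrite inE le_refl.
  - by case=> y yD; rewrite inE; apply: H.
apply: (big_ind (fun S => S \in tau)) => // y _; exact: M_open.
Qed.

Definition r (t : T) : nat := pickle t.

Definition leT a b := le (h a) (h b).
Definition le' a b := leT a b && (leT b a ==> (r a <= r b)).

Lemma le'_refl a : le' a a.
Proof. by rewrite /le' /leT le_refl leqnn. Qed.

Lemma le'_trans a b c : le' a b -> le' b c -> le' a c.
Proof.
rewrite /le' /leT => /andP [lab iab] /andP [lbc ibc].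
rewrite (le_trans lab lbc) /=; apply/implyP => lca.
have lba := le_trans lbc lca.
have lcb := le_trans lca lab.
rewrite lba in iab; rewrite lcb in ibc.
exact: leq_trans iab ibc.
Qed.

Lemma le'_anti a b : le' a b -> le' b a -> a = b.
Proof.
rewrite /le' => /andP [lab iab] /andP [lba iba].
rewrite lba in iab; rewrite lab in iba.
apply: (pcan_inj (@pickleK T)); apply/eqP; rewrite eqn_leq.
by move: iab iba; rewrite /r /= => -> ->.
Qed.

Definition tauT : {set {set T}} :=
  [set U : {set T} | [forall a in U, forall b, le' b a ==> (b \in U)]].

Lemma inTauP (U : {set T}) : reflect (forall a b, a \in U -> le' b a -> b \in U) (U \in tauT).
Proof.
rewrite inE; apply: (iffP forallP) => H.
- move=> a b aU lba; move: (H a); rewrite aU /= => /forallP /(_ b).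
  by rewrite lba.
- move=> a; apply/implyP => aU; apply/forallP => b; apply/implyP; exact: H.
Qed.

Lemma closedTP (J : {set T}) : ~: J \in tauT -> forall j w, j \in J -> le' j w -> w \in J.
Proof.
move/inTauP => H j w jJ ljw; case wJ: (w \in J) => //.
have : j \in ~: J by apply: (H w) => //; rewrite inE wJ.
by rewrite inE jJ.
Qed.

Lemma tauT_top : is_topology tauT.
Proof.
split.
- by apply/inTauP => a b; rewrite inE.
- by apply/inTauP => a b; rewrite inE.
- move=> U V /inTauP HU /inTauP HV; apply/inTauP => a b; rewrite !inE.
  by case/orP => aU lba; [rewrite (HU a b) | rewrite (HV a b) ?orbT].
- move=> U V /inTauP HU /inTauP HV; apply/inTauP => a b; rewrite !inE.
  by case/andP => aU aV lba; rewrite (HU a b) // (HV a b).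
Qed.

Lemma below_min x : exists t, le (h t) x /\ forall v, le x (h v) -> le' t v.
Proof.
case: (hsurj x) => t0 ht0.
pose P t := le (h t) x && le x (h t).
have P0 : P t0 by rewrite /P ht0 le_refl.
case: (arg_minnP r P0) => t /andP [l1 l2] Hmin.
exists t; split => // v lxv.
rewrite /le' /leT (le_trans l1 lxv) /=; apply/implyP => lvt.
apply: Hmin; rewrite /P lxv andbT; exact: le_trans lvt l1.
Qed.

Lemma above_max x : exists t, le x (h t) /\ forall j, le (h j) x -> le' j t.
Proof.
case: (hsurj x) => t0 ht0.
pose P t := le (h t) x && le x (h t).
have P0 : P t0 by rewrite /P ht0 le_refl.
case: (arg_maxnP r P0) => t /andP [l1 l2] Hmax.
exists t; split => // j ljx.
rewrite /le' /leT (le_trans ljx l2) /=; apply/implyP => ltj.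
apply: Hmax; rewrite /P ljx /=; exact: le_trans l2 ltj.
Qed.

Definition Down (V : {set T}) : {set X} := [set x | [exists v in V, le x (h v)]].
Definition Up (J : {set T}) : {set X} := [set x | [exists j in J, le (h j) x]].
Definition Pre (U : {set X}) : {set T} := h @^-1: U.

Lemma Down_open (V : {set T}) : Down V \in tau.
Proof.
apply: down_open => x y; rewrite !inE => /existsP [v /andP [vV lyv]] lxy.
by apply/existsP; exists v; rewrite vV (le_trans lxy lyv).
Qed.

Lemma Down_mem (V : {set T}) a : a \in V -> h a \in Down V.
Proof. by move=> aV; rewrite inE; apply/existsP; exists a; rewrite aV le_refl. Qed.

Lemma Down_disj (V W : {set T}) : V \in tauT -> W \in tauT -> V :&: W == set0 ->
  Down V :&: Down W == set0.
Proof.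
move=> /inTauP HV /inTauP HW /eqP VW; apply/eqP/setP => x; rewrite !inE.
apply/negP => /andP [/existsP [v /andP [vV lxv]] /existsP [w /andP [wW lxw]]].
case: (below_min x) => t [ltx Ht].
have tV : t \in V by apply: (HV v) => //; apply: Ht.
have tW : t \in W by apply: (HW w) => //; apply: Ht.
have : t \in V :&: W by rewrite inE tV tW.
by rewrite VW inE.
Qed.

Lemma Up_closed (J : {set T}) : ~: Up J \in tau.
Proof.
apply: down_open => x y; rewrite !inE => nyJ lxy; apply/negP => /existsP [j /andP [jJ ljx]].
move/negP: nyJ; apply; apply/existsP; exists j; rewrite jJ; exact: le_trans ljx lxy.
Qed.

Lemma Up_mem (J : {set T}) a : a \in J -> h a \in Up J.
Proof. by move=> aJ; rewrite inE; apply/existsP; exists a; rewrite aJ le_refl. Qed.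

Lemma Up_sub (J V : {set T}) : ~: J \in tauT -> J \subset V -> Up J \subset Down V.
Proof.
move=> /closedTP HJ /subsetP JV; apply/subsetP => x; rewrite !inE.
case/existsP => j /andP [jJ ljx].
case: (above_max x) => t [lxt Ht].
have tJ : t \in J by apply: (HJ j) => //; apply: Ht.
by apply/existsP; exists t; rewrite JV.
Qed.

Lemma Pre_open (U : {set X}) : U \in tau -> Pre U \in tauT.
Proof.
move=> Ut; apply/inTauP => a b; rewrite !inE => haU /andP [lba _].
by move/leP: lba; apply.
Qed.

Lemma Pre_closed (U : {set X}) : ~: U \in tau -> ~: Pre U \in tauT.
Proof. by move=> H; rewrite /Pre -preimsetC; apply: Pre_open. Qed.

Lemma Pre_disj (U V : {set X}) : U :&: V == set0 -> Pre U :&: Pre V == set0.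
Proof. by move/eqP => H; rewrite /Pre -preimsetI H preimset0. Qed.

Lemma Pre_sub (U V : {set X}) : U \subset V -> Pre U \subset Pre V.
Proof. exact: preimsetS. Qed.

Lemma Pre_mem (U : {set X}) a : (a \in Pre U) = (h a \in U).
Proof. by rewrite inE. Qed.


Lemma not_le' a b : ~~ le' b a -> ~~ le' a b -> ~~ leT b a.
Proof.
rewrite /le' => n1 n2; apply/negP => lba; move: n1 n2; rewrite lba /=.
case: (leT a b) => //=; case: (leqP (r b) (r a)) => // H _.
by rewrite (ltnW H).
Qed.

Lemma T1_eq a b : T1_sep tauT a b = T1_sep tau (h a) (h b).
Proof.
apply/idP/idP.
- case/existsP => Ua /existsP [Ub /and5P [oa ob aa ba /andP [bb ab]]].
  have n1 : ~~ le' b a by apply/negP => l; move/negP: ba; apply; move/inTauP: oa => H; exact: (H a).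
  have n2 : ~~ le' a b by apply/negP => l; move/negP: ab; apply; move/inTauP: ob => H; exact: (H b).
  have m1 := not_le' n1 n2; have m2 := not_le' n2 n1.
  apply/existsP; exists [set x | le x (h a)]; apply/existsP; exists [set x | le x (h b)].
  rewrite /is_open !M_open !inE !le_refl /=.
  by rewrite /leT in m1 m2; rewrite m1 m2.
- case/existsP => Ua /existsP [Ub /and5P [oa ob aa ba /andP [bb ab]]].
  apply/existsP; exists (Pre Ua); apply/existsP; exists (Pre Ub).
  by rewrite /is_open !Pre_open // !Pre_mem aa ba bb ab.
Qed.

Lemma T2_eq a b : T2_sep tauT a b = T2_sep tau (h a) (h b).
Proof.
apply/idP/idP.
- case/existsP => Ua /existsP [Ub /and5P [oa ob aa bb d]].
  apply/existsP; exists (Down Ua); apply/existsP; exists (Down Ub).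
  by rewrite /is_open !Down_open !Down_mem // Down_disj.
- case/existsP => Ua /existsP [Ub /and5P [oa ob aa bb d]].
  apply/existsP; exists (Pre Ua); apply/existsP; exists (Pre Ub).
  by rewrite /is_open !Pre_open // !Pre_mem aa bb Pre_disj.
Qed.

Lemma T3a_eq a b : T3a_sep tauT a b = T3a_sep tau (h a) (h b).
Proof.
apply/idP/idP.
- case/existsP => J /existsP [UJ /existsP [Ub /and5P [cJ oJ ob aJ /andP [sJ /andP [bb d]]]]].
  apply/existsP; exists (Up J); apply/existsP; exists (Down UJ); apply/existsP; exists (Down Ub).
  by rewrite /is_open /is_closed Up_closed !Down_open Up_mem // Down_mem // Up_sub // Down_disj.
- case/existsP => J /existsP [UJ /existsP [Ub /and5P [cJ oJ ob aJ /andP [sJ /andP [bb d]]]]].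
  apply/existsP; exists (Pre J); apply/existsP; exists (Pre UJ); apply/existsP; exists (Pre Ub).
  by rewrite /is_open /is_closed Pre_closed // !Pre_open // !Pre_mem aJ bb Pre_sub // Pre_disj.
Qed.

Lemma T3b_eq a b : T3b_sep tauT a b = T3b_sep tau (h a) (h b).
Proof.
apply/idP/idP.
- case/existsP => K /existsP [Ua /existsP [UK /and5P [cK oa oK aa /andP [bK /andP [sK d]]]]].
  apply/existsP; exists (Up K); apply/existsP; exists (Down Ua); apply/existsP; exists (Down UK).
  by rewrite /is_open /is_closed Up_closed !Down_open Up_mem // Down_mem // Up_sub // Down_disj.
- case/existsP => K /existsP [Ua /existsP [UK /and5P [cK oa oK aa /andP [bK /andP [sK d]]]]].
  apply/existsP; exists (Pre K); apply/existsP; exists (Pre Ua); apply/existsP; exists (Pre UK).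
  by rewrite /is_open /is_closed Pre_closed // !Pre_open // !Pre_mem aa bK Pre_sub // Pre_disj.
Qed.

Lemma T4_eq a b : T4_sep tauT a b = T4_sep tau (h a) (h b).
Proof.
apply/idP/idP.
- case/existsP => J /existsP [K /existsP [UJ /existsP [UK
    /and5P [cJ cK aJ bK /and5P [oJ oK sJ sK d]]]]].
  apply/existsP; exists (Up J); apply/existsP; exists (Up K);
  apply/existsP; exists (Down UJ); apply/existsP; exists (Down UK).
  by rewrite /is_open /is_closed !Up_closed !Down_open !Up_mem // !Up_sub // Down_disj.
- case/existsP => J /existsP [K /existsP [UJ /existsP [UK
    /and5P [cJ cK aJ bK /and5P [oJ oK sJ sK d]]]]].
  apply/existsP; exists (Pre J); apply/existsP; exists (Pre K);
  apply/existsP; exists (Pre UJ); apply/existsP; exists (Pre UK).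
  by rewrite /is_open /is_closed !Pre_closed // !Pre_open // !Pre_mem aJ bK !Pre_sub // Pre_disj.
Qed.

Lemma sep_eq i a b : separated i tauT a b = separated i tau (h a) (h b).
Proof.
case: i => /=.
- exact: T1_eq.
- exact: T2_eq.
- by rewrite /T3'_sep T3a_eq T3b_eq.
- by rewrite /T3''_sep T3a_eq T3b_eq.
- exact: T4_eq.
Qed.

Lemma mset_neq a b : a != b -> mset tauT a != mset tauT b.
Proof.
move=> nab; apply/negP => /eqP E.
have key : forall c d, mset tauT c = mset tauT d -> le' c d.
  move=> c d Ecd.
  have : c \in mset tauT d by rewrite -Ecd; apply/bigcapP => U /andP [].
  have Hd : [set z | le' z d] \in tauT.
    apply/inTauP => x y; rewrite !inE => lxd lyx; exact: le'_trans lyx lxd.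
  move/bigcapP => H.
  have := H [set z | le' z d]; rewrite Hd [d \in _]inE le'_refl => /(_ isT).
  by rewrite inE.
by move/negP: nab; apply; apply/eqP; apply: le'_anti; apply: key.
Qed.

End Constr.


Theorem lemma3p4 (i : sep_index) (T : finType) (e : rel T) :
  simple_graph e -> in_class i e ->
  exists tau : {set {set T}},
    [/\ is_topology tau, graph_iso (sep_graph i tau) e &
        forall x y : T, x != y -> mset tau x != mset tau y].
Proof.
move=> _ [X [tau [top [g [[h gh hg] giso]]]]].
have hsurj : forall x, exists t, h t = x by move=> x; exists (g x); rewrite gh.
exists (tauT tau h); split.
- exact: tauT_top.
- exists id; split; first by exists id.
  move=> a b; have -> : e a b = e (g (h a)) (g (h b)) by rewrite !hg.
  by rewrite -giso /sep_graph (sep_eq top hsurj) (inj_eq (can_inj hg)).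
- move=> x y; exact: mset_neq.
Qed.
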